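(* Let $G=(V,E)$ be a finite, connected, bipartite cubic graph. For every $A\in\mathcal F(G)$, every $x\in V$, and every neighbour $x'$ of $x$, there exists a path $z_1z_2\cdots z_{2k}$ in $G$ (with distinct vertices, $k\ge1$) such that $z_1=x$, $z_{2k}=x'$, $z_iz_{i+1}\notin A$ for all odd $i$, and $z_iz_{i+1}\in A$ for all even $i$.
   Context: $\mathcal F(G)=\{A\subseteq E: d_w(A)=2\text{ for all }w\in V\}$, where $d_w(A)$ is the number of edges of $A$ incident to $w$ (the 2-factors of $G$). *)

(* Defs.v *)
From mathcomp Require Import all_boot.
Set Implicit Arguments. Unset Strict Implicit. Unset Printing Implicit Defensive.

Definition simple_graph (T : finType) (e : rel T) : Prop :=
  symmetric e /\ irreflexive e.

Definition edges (T : finType) (e : rel T) : {set {set T}} :=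
  [set [set p.1; p.2] | p in [pred p : T * T | e p.1 p.2]].

Definition deg_in (T : finType) (A : {set {set T}}) (w : T) : nat :=
  #|[set a in A | w \in a]|.

Definition two_factors (T : finType) (e : rel T) : {set {set {set T}}} :=
  [set A : {set {set T}} | (A \subset edges e) && [forall w, deg_in A w == 2]].

Definition cubic (T : finType) (e : rel T) : Prop :=
  forall x : T, #|[set y | e x y]| = 3.

Definition connected (T : finType) (e : rel T) : Prop :=
  forall x y : T, connect e x y.

Definition bipartite (T : finType) (e : rel T) : Prop :=
  exists c : T -> bool, forall x y, e x y -> c x != c y.

(* Main.v *)
Require Import Defs.
From mathcomp Require Import all_boot.
Set Implicit Arguments. Unset Strict Implicit. Unset Printing Implicit Defensive.

Definition anbr (T : finType) (e : rel T) (A : {set {set T}}) v :=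
  [set y | e v y && ([set v; y] \in A)].

Lemma anbr_card (T : finType) (e : rel T) (A : {set {set T}}) :
  simple_graph e -> A \in two_factors e -> forall v, #|anbr e A v| = 2.
Proof.
move=> [esym eirr] HA v.
move: HA; rewrite inE => /andP [HAE /forallP Hdeg].
have := eqP (Hdeg v); rewrite /deg_in => <-.
rewrite -(@card_in_imset _ _ (fun y => [set v; y])).
  apply: eq_card => a; rewrite [in RHS]inE; apply/imsetP/andP.
    case=> y; rewrite inE => /andP[evy yA] ->; split => //.
    by rewrite !inE eqxx.
  case=> aA va; have := subsetP HAE a aA.
  case/imsetP => [[p1 p2]]; rewrite inE /= => ep aE.
  move: va; rewrite aE !inE => /orP[/eqP-> | /eqP->].
    by exists p2 => //; rewrite inE ep -aE aA.
  exists p1; last by rewrite setUC.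
  by rewrite inE esym ep setUC -aE aA.
move=> y1 y2; rewrite !inE => /andP[e1 _] /andP[e2 _] eq.
have : y1 \in [set v; y2] by rewrite -eq !inE eqxx orbT.
rewrite !inE => /orP[/eqP h|/eqP //].
by rewrite h eirr in e1.
Qed.

Definition mate (T : finType) (e : rel T) (A : {set {set T}}) v :=
  odflt v [pick y in [set y | e v y] :\: anbr e A v].

Lemma mateP (T : finType) (e : rel T) (A : {set {set T}}) :
  simple_graph e -> cubic e -> A \in two_factors e -> forall v y,
  (e v y && ([set v; y] \notin A)) = (y == mate e A v).
Proof.
move=> sg cub HA v y.
have c : #|[set y | e v y] :\: anbr e A v| == 1.
  rewrite cardsD (setIidPr _) ?cub ?(anbr_card sg HA) //.
  by apply/subsetP => z; rewrite !inE => /andP[].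
case/cards1P: c => z Hz.
have -> : mate e A v = z.
  rewrite /mate; case: pickP => [u|]; first by rewrite Hz inE => /eqP.
  by move=> /(_ z); rewrite Hz inE eqxx.
have := congr1 (fun S : {set T} => y \in S) Hz; rewrite /= !inE => <-.
by case: (e v y); case: ([set v; y] \in A).
Qed.
Lemma count_pairs (T : finType) (D : rel T) n (R : {set T}) :
  (forall v, #|[set w | D v w]| = n) ->
  #|[set p : T * T | (p.1 \in R) && D p.1 p.2]| = #|R| * n.
Proof.
move=> H.
rewrite -sum1dep_card.
have -> : \sum_(p | (p.1 \in R) && D p.1 p.2) 1 = \sum_(i | i \in R) \sum_(j | D i j) 1
  by rewrite pair_big_dep.
rewrite -sum_nat_const; apply: eq_bigr => i _.
by rewrite sum1dep_card H.
Qed.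

Lemma in_closed (T : finType) (D : rel T) n (R : {set T}) :
  (forall v, #|[set w | D v w]| = n) ->
  (forall w, #|[set v | D v w]| = n) ->
  (forall v w, v \in R -> D v w -> w \in R) ->
  forall v w, w \in R -> D v w -> v \in R.
Proof.
move=> Hout Hin Hcl v w wR Dvw.
set S1 := [set p : T * T | (p.1 \in R) && D p.1 p.2].
set S2' := [set p : T * T | (p.1 \in R) && D p.2 p.1].
have c1 : #|S1| = #|R| * n by apply: count_pairs.
have c2 : #|S2'| = #|R| * n by apply: (@count_pairs T (fun a b => D b a)) => u; apply: Hin.
pose sw := fun p : T * T => (p.2, p.1).
have swK : cancel sw sw by case.
have c3 : #|sw @^-1: S2'| = #|R| * n by rewrite (card_preimset _ (can_inj swK)).
have sub : S1 \subset sw @^-1: S2'.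
  apply/subsetP => [[a b]]; rewrite !inE /= => /andP[aR Dab].
  by rewrite Dab (Hcl a b aR Dab).
have eqS : S1 = sw @^-1: S2'.
  by apply/eqP; rewrite eqEcard sub c1 c3 leqnn.
have : (v, w) \in sw @^-1: S2' by rewrite !inE /= wR Dvw.
by rewrite -eqS inE /= => /andP[].
Qed.
Fixpoint il (T : Type) (f : T -> T) (s : seq T) : seq T :=
  if s is v :: t then v :: f v :: il f t else [::].

Lemma size_il (T : Type) (f : T -> T) s : size (il f s) = (size s).*2.
Proof. by elim: s => //= v t ->; rewrite doubleS. Qed.

Lemma nth_il_even (T : Type) (f : T -> T) s x0 j :
  nth x0 (il f s) j.*2 = nth x0 s j.
Proof. elim: s j => [|v t IH] [|j] //=; by rewrite doubleS /= IH. Qed.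

Lemma nth_il_odd (T : Type) (f : T -> T) s x0 j : j < size s ->
  nth x0 (il f s) j.*2.+1 = f (nth x0 s j).
Proof. elim: s j => [|v t IH] [|j] //= lt; by rewrite ?doubleS /= ?IH. Qed.

Lemma mem_il (T : eqType) (f : T -> T) s y :
  (y \in il f s) = (y \in s) || (y \in map f s).
Proof.
elim: s => //= v t IH; rewrite !inE IH.
by case: (y == v); case: (y == f v); case: (y \in t); case: (y \in map f t).
Qed.

Lemma uniq_il (T : eqType) (f : T -> T) s : injective f ->
  (forall u v, u \in s -> v \in s -> f u != v) -> uniq s -> uniq (il f s).
Proof.
move=> finj; elim: s => //= v t IH H /andP[vt ut].
rewrite !inE !mem_il (mem_map finj) (negbTE vt) /=.
have -> : (v == f v) = false by apply/negbTE; rewrite eq_sym H ?inE ?eqxx.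
have -> : (f v \in t) = false.
  apply/negbTE/negP => fvt; have := H v (f v); rewrite !inE eqxx fvt orbT eqxx.
  by move=> /(_ isT isT).
have -> : (v \in map f t) = false.
  apply/negbTE/negP => /mapP [u uin vE].
  by have := H u v; rewrite !inE uin eqxx !orbT vE eqxx => /(_ isT isT).
rewrite IH //= => a b at' bt; apply: H; by rewrite inE ?at' ?bt orbT.
Qed.

Theorem lemma3 (T : finType) (e : rel T) :
  simple_graph e -> connected e -> bipartite e -> cubic e ->
  forall A : {set {set T}}, A \in two_factors e ->
  forall x x' : T, e x x' ->
  exists k : nat, 0 < k /\
  exists s : seq T,
    [/\ size s = k.*2, uniq s, nth x s 0 = x, nth x s (k.*2).-1 = x' &
      forall i, i.+1 < size s ->
        e (nth x s i) (nth x s i.+1) /\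
        ([set nth x s i; nth x s i.+1] \in A) = odd i].
Proof.
move=> sg conn [c Hc] cub A HA x x' exx'.
have [esy eirr] := sg.
set m := mate e A.
have mP := mateP sg cub HA.
have me : forall v, e v (m v).
  by move=> v; have := mP v (m v); rewrite eqxx => /andP[].
have mnA : forall v, [set v; m v] \notin A.
  by move=> v; have := mP v (m v); rewrite eqxx => /andP[].
have mm : forall v, m (m v) = v.
  move=> v; symmetry; apply/eqP; rewrite -mP esy me /=.
  by rewrite (setUC [set m v]) mnA.
have minj : injective m := can_inj mm.
pose D : rel T := fun v w => w \in anbr e A (m v).
have Dout : forall v, #|[set w | D v w]| = 2.
  by move=> v; rewrite -(anbr_card sg HA (m v)); apply: eq_card => w; rewrite [in LHS]inE.
have Din : forall w, #|[set v | D v w]| = 2.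
  move=> w; rewrite -(anbr_card sg HA w) -(card_preimset _ minj).
  apply: eq_card => v; rewrite [in LHS]inE /D !inE.
  by rewrite mm (esy v w) (setUC [set v]).
pose R := [set y | connect D x y].
have Rcl : forall v w, v \in R -> D v w -> w \in R.
  move=> v w; rewrite !inE => xv Dvw; exact: connect_trans xv (connect1 Dvw).
have Rin := in_closed Dout Din Rcl.
pose S := [set y | (y \in R) || (m y \in R)].
have Scl : forall y z, y \in S -> e y z -> z \in S.
  move=> y z yS eyz.
  have [zA | znA] := boolP ([set y; z] \in A).
    have Dmz : D (m z) y by rewrite /D mm inE esy eyz (setUC [set z]) zA.
    have Dmy : D (m y) z by rewrite /D mm inE eyz zA.
    rewrite inE; move: yS; rewrite inE => /orP[yR|myR].
      by rewrite (Rin _ _ yR Dmz) orbT.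
    by rewrite (Rcl _ _ myR Dmy).
  have zm : z = m y by apply/eqP; rewrite -mP eyz znA.
  by rewrite inE zm mm orbC; move: yS; rewrite inE.
have x'S : x' \in S.
  have xS : x \in S by rewrite !inE connect0.
  case/connectP: (conn x x') => p; move: xS.
  move: (x) => x0; elim: p x0 => [|a p IH] y yS /=; first by move=> _ ->.
  move=> /andP[eya pa] lst; exact: IH a (Scl y a yS eya) pa lst.
have Dc : forall v w, D v w -> c w = c v.
  move=> v w; rewrite /D inE => /andP[emw _].
  have h1 := Hc _ _ emw; have h2 := Hc _ _ (me v).
  by move: h1 h2; case: (c w); case: (c (m v)); case: (c v).
have Pc : forall p u, path D u p -> all (fun y => c y == c u) (u :: p).
  elim=> [|a p IH] u /=; first by rewrite eqxx.
  move=> /andP[Dua pa]; rewrite eqxx /=.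
  have := IH a pa; rewrite (Dc _ _ Dua) /= => /andP[_ ->]; by rewrite eqxx.
have Rc : forall y, y \in R -> c y = c x.
  move=> y; rewrite inE => /connectP [p pD ->].
  by have := Pc p x pD; move/allP => /(_ _ (mem_last x p)) /eqP.
have x'R : x' \notin R.
  apply/negP => /Rc E; have := Hc _ _ exx'; by rewrite E eqxx.
have : connect D x (m x') by move: x'S; rewrite inE (negbTE x'R) /= inE.
case/connectP => p pD; move: pD.
move=> pD; move: (pD); case/shortenP => q qD quniq _ mx'E.
have qc := Pc q x qD.
exists (size (x :: q)); split; first by [].
exists (il m (x :: q)); split.
- by rewrite size_il.
- apply: uniq_il => // u v uin vin.
  move/allP: qc => qc; have := qc u uin; have := qc v vin.
  move=> /eqP cv /eqP cu; apply/negP => /eqP E.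
  by have := Hc _ _ (me u); rewrite E cv cu eqxx.
- by [].
- rewrite (_ : (size (x :: q)).*2.-1 = (size q).*2.+1) // nth_il_odd //.
  have := nth_last x (x :: q); rewrite /= => ->.
  by rewrite -mx'E mm.
- move=> i; rewrite size_il.
  have [j [->|->]] : exists j, i = j.*2 \/ i = j.*2.+1.
    exists i./2; case E: (odd i); have := odd_double_half i; rewrite E => Hi.
      by right; rewrite -{1}Hi.
    by left; rewrite -{1}Hi.
    move=> lt.
    have lt' : j < size (x :: q) by rewrite -ltn_double; exact: ltnW.
    rewrite nth_il_even nth_il_odd // odd_double me.
    by rewrite (negbTE (mnA _)).
  rewrite -doubleS ltn_double => lt.
  rewrite nth_il_odd; last exact: ltnW.
  rewrite nth_il_even.
  move/pathP: qD => /(_ x j lt).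
  rewrite /D inE => /andP[h1 h2]; split => //.
  by rewrite h2 /= odd_double.
Qed.
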